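(* Let $L\ge2$, fix an input $x\in\mathbb R^{d_0}$, and consider the $L$-layer ReLU network with parameters $\bm\theta=(W_1,b_1,\dots,W_L,b_L)$, where $W_l\in\mathbb R^{d_l\times d_{l-1}}$, $b_l\in\mathbb R^{d_l}$ for $l<L$, and $W_L\in\mathbb R^{C\times d_{L-1}}$, $b_L\in\mathbb R^C$; define $a_0(x)=x$, $a_l(x)=\sigma(W_la_{l-1}(x)+b_l)$ for $l=1,\dots,L-1$, and $F_x(\bm\theta)=W_La_{L-1}(x)+b_L$. Define $Z_1^+=\sigma(W_1x+b_1)$, $Z_1^-=0$ and, for $l=1,\dots,L-2$, $p_{l+1}=\sigma(W_{l+1})Z_l^++\sigma(-W_{l+1})Z_l^-+b_{l+1}$, $Z_{l+1}^-=\sigma(W_{l+1})Z_l^-+\sigma(-W_{l+1})Z_l^+$, $Z_{l+1}^+=\max\{p_{l+1},Z_{l+1}^-\}$, and set $A(\bm\theta)=\sigma(W_L)Z_{L-1}^++\sigma(-W_L)Z_{L-1}^-+\sigma(b_L)$, $B(\bm\theta)=\sigma(W_L)Z_{L-1}^-+\sigma(-W_L)Z_{L-1}^++\sigma(-b_L)$. Then $F_x(\bm\theta)=A(\bm\theta)-B(\bm\theta)$ for all $\bm\theta$, and for every block $\theta_l=(W_l,b_l)$, $l\in\{1,\dots,L\}$, when all other blocks are held fixed, each coordinate of $A$ and of $B$ is nonnegative and convex as a function of $\theta_l$.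
   Context: $\sigma(t)=\max\{t,0\}$ is the ReLU, applied entrywise to vectors and matrices; $\max\{\cdot,\cdot\}$ of two vectors is taken coordinatewise. *)

(* Defs.v *)
From HB Require Import structures.
From mathcomp Require Import all_boot all_order all_algebra.
Set Implicit Arguments. Unset Strict Implicit. Unset Printing Implicit Defensive.
Import Order.TTheory GRing.Theory Num.Theory.
Local Open Scope ring_scope.

Section Net.
Variable R : realFieldType.

Definition relu (t : R) : R := Num.max t 0.
Definition relu_mx m n (A : 'M[R]_(m, n)) : 'M[R]_(m, n) := map_mx relu A.
Definition max_mx m n (A B : 'M[R]_(m, n)) : 'M[R]_(m, n) := map2_mx Num.max A B.

(* Layer widths d : nat -> nat (d 0 = input dim; for L = n.+2 layers the
   output dimension C is d n.+2).  Layer l (1-based) has weight W (l-1) :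
   'M_(d l, d (l-1)) and bias b (l-1) : 'cV_(d l) (0-based indexing). *)
Variable d : nat -> nat.
Definition weights := forall k : nat, 'M[R]_(d k.+1, d k).
Definition biases := forall k : nat, 'cV[R]_(d k.+1).

Variable x : 'cV[R]_(d 0).

Fixpoint act (W : weights) (b : biases) (k : nat) : 'cV[R]_(d k) :=
  match k with
  | 0 => x
  | k'.+1 => relu_mx (W k' *m act W b k' + b k')
  end.

Definition Fx (n : nat) (W : weights) (b : biases) : 'cV[R]_(d n.+2) :=
  W n.+1 *m act W b n.+1 + b n.+1.

(* Zpm W b k = (Z_{k+1}^+, Z_{k+1}^-) *)
Fixpoint Zpm (W : weights) (b : biases) (k : nat)
  : 'cV[R]_(d k.+1) * 'cV[R]_(d k.+1) :=
  match k with
  | 0 => (relu_mx (W 0%N *m x + b 0%N), 0)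
  | k'.+1 =>
      let zp := (Zpm W b k').1 in
      let zm := (Zpm W b k').2 in
      let p := relu_mx (W k'.+1) *m zp + relu_mx (- W k'.+1) *m zm + b k'.+1 in
      let zm' := relu_mx (W k'.+1) *m zm + relu_mx (- W k'.+1) *m zp in
      (max_mx p zm', zm')
  end.

Definition Apart (n : nat) (W : weights) (b : biases) : 'cV[R]_(d n.+2) :=
  relu_mx (W n.+1) *m (Zpm W b n).1 + relu_mx (- W n.+1) *m (Zpm W b n).2
  + relu_mx (b n.+1).

Definition Bpart (n : nat) (W : weights) (b : biases) : 'cV[R]_(d n.+2) :=
  relu_mx (W n.+1) *m (Zpm W b n).2 + relu_mx (- W n.+1) *m (Zpm W b n).1
  + relu_mx (- b n.+1).

End Net.

Definition combW (R : realFieldType) (d : nat -> nat) (t : R)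
  (W W' : weights R d) : weights R d := fun k => t *: W k + (1 - t) *: W' k.
Definition combb (R : realFieldType) (d : nat -> nat) (t : R)
  (b b' : biases R d) : biases R d := fun k => t *: b k + (1 - t) *: b' k.

(* Main.v *)
Require Import Defs.
From HB Require Import structures.
From mathcomp Require Import all_boot all_order all_algebra.
From mathcomp Require Import ring lra.
Set Implicit Arguments. Unset Strict Implicit. Unset Printing Implicit Defensive.
Import Order.TTheory GRing.Theory Num.Theory.
Local Open Scope ring_scope.

Section Aux.
Variable R : realFieldType.

Lemma relu_ge0 (a : R) : 0 <= relu a.
Proof. by rewrite /relu le_max lexx orbT. Qed.

Lemma relu_split1 (a : R) : relu a - relu (- a) = a.
Proof. rewrite /relu /Order.max. case: ifP => h1; case: ifP => h2; lra. Qed.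

Lemma max_sub1 (p m : R) : Num.max p m - m = Num.max (p - m) 0.
Proof. rewrite /Order.max. case: ifP => h1; case: ifP => h2; lra. Qed.

Lemma nonneg_mul m n p (A : 'M[R]_(m, n)) (B : 'M[R]_(n, p)) :
  (forall i j, 0 <= A i j) -> (forall i j, 0 <= B i j) ->
  forall i j, 0 <= (A *m B) i j.
Proof.
move=> hA hB i j; rewrite !mxE; apply: sumr_ge0 => k _.
exact: mulr_ge0.
Qed.

Lemma relu_mx_ge0 m n (A : 'M[R]_(m, n)) i j : 0 <= relu_mx A i j.
Proof. by rewrite mxE relu_ge0. Qed.

Variable t : R.
Hypothesis t0 : 0 <= t.
Hypothesis t1 : t <= 1.

Definition cvxm m n (A A' At : 'M[R]_(m, n)) :=
  forall i j, At i j <= t * A i j + (1 - t) * A' i j.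

Lemma max_cvx (a b a' b' at_ bt : R) :
  at_ <= t * a + (1 - t) * a' -> bt <= t * b + (1 - t) * b' ->
  Num.max at_ bt <= t * Num.max a b + (1 - t) * Num.max a' b'.
Proof.
move=> h1 h2.
have ha : a <= Num.max a b by rewrite le_max lexx.
have hb : b <= Num.max a b by rewrite le_max lexx orbT.
have ha' : a' <= Num.max a' b' by rewrite le_max lexx.
have hb' : b' <= Num.max a' b' by rewrite le_max lexx orbT.
have t1' : 0 <= 1 - t by rewrite subr_ge0.
rewrite ge_max; apply/andP; split.
  have p1 : t * a <= t * Num.max a b by apply: ler_wpM2l.
  have p2 : (1 - t) * a' <= (1 - t) * Num.max a' b' by apply: ler_wpM2l.
  lra.
have p1 : t * b <= t * Num.max a b by apply: ler_wpM2l.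
have p2 : (1 - t) * b' <= (1 - t) * Num.max a' b' by apply: ler_wpM2l.
lra.
Qed.

Lemma cvx_eq m n (A : 'M[R]_(m, n)) : cvxm A A A.
Proof. by move=> i j; rewrite -mulrDl addrC subrK mul1r. Qed.

Lemma cvx_lin m n (A A' : 'M[R]_(m, n)) : cvxm A A' (t *: A + (1 - t) *: A').
Proof. by move=> i j; rewrite !mxE. Qed.

Lemma cvx_add m n (A A' At B B' Bt : 'M[R]_(m, n)) :
  cvxm A A' At -> cvxm B B' Bt -> cvxm (A + B) (A' + B') (At + Bt).
Proof. move=> hA hB i j; rewrite !mxE; have := hA i j; have := hB i j; lra. Qed.

Lemma cvx_relu m n (A A' At : 'M[R]_(m, n)) :
  cvxm A A' At -> cvxm (relu_mx A) (relu_mx A') (relu_mx At).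
Proof.
move=> hA i j; rewrite !mxE /relu; apply: max_cvx => //.
rewrite !mulr0; lra.
Qed.

Lemma cvx_max m n (A A' At B B' Bt : 'M[R]_(m, n)) :
  cvxm A A' At -> cvxm B B' Bt -> cvxm (max_mx A B) (max_mx A' B') (max_mx At Bt).
Proof. by move=> hA hB i j; rewrite !mxE; apply: max_cvx. Qed.

Lemma cvx_mulfixed m n p (M : 'M[R]_(m, n)) (z z' zt : 'M[R]_(n, p)) :
  (forall i j, 0 <= M i j) -> cvxm z z' zt -> cvxm (M *m z) (M *m z') (M *m zt).
Proof.
move=> hM hz i j; rewrite !mxE !mulr_sumr -big_split /=.
apply: ler_sum => k _; have := hM i k; have := hz k j; nra.
Qed.

Lemma cvx_mulvar m n p (M M' Mt : 'M[R]_(m, n)) (z : 'M[R]_(n, p)) :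
  (forall i j, 0 <= z i j) -> cvxm M M' Mt -> cvxm (M *m z) (M' *m z) (Mt *m z).
Proof.
move=> hz hM i j; rewrite !mxE !mulr_sumr -big_split /=.
apply: ler_sum => k _; have := hM i k; have := hz k j; nra.
Qed.

End Aux.

Section Net2.
Variable R : realFieldType.
Variable d : nat -> nat.
Variable x : 'cV[R]_(d 0).

Lemma Zpm0 (W : weights R d) (b : biases R d) :
  Zpm x W b 0 = (relu_mx (W 0%N *m x + b 0%N), 0).
Proof. by []. Qed.

Lemma ZpmS (W : weights R d) (b : biases R d) l :
  Zpm x W b l.+1 =
  (max_mx (relu_mx (W l.+1) *m (Zpm x W b l).1 + relu_mx (- W l.+1) *m (Zpm x W b l).2 + b l.+1)
          (relu_mx (W l.+1) *m (Zpm x W b l).2 + relu_mx (- W l.+1) *m (Zpm x W b l).1),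
   relu_mx (W l.+1) *m (Zpm x W b l).2 + relu_mx (- W l.+1) *m (Zpm x W b l).1).
Proof. by []. Qed.

Lemma Zpm_ge0 (W : weights R d) (b : biases R d) l :
  (forall i j, 0 <= (Zpm x W b l).1 i j) /\ (forall i j, 0 <= (Zpm x W b l).2 i j).
Proof.
elim: l => [|l [h1 h2]].
  rewrite Zpm0; split; first exact: relu_mx_ge0.
  by move=> i j; rewrite mxE.
rewrite ZpmS /=.
have hm : forall i j, 0 <= (relu_mx (W l.+1) *m (Zpm x W b l).2 +
                             relu_mx (- W l.+1) *m (Zpm x W b l).1) i j.
  move=> i j; rewrite mxE; apply: addr_ge0; apply: nonneg_mul => //;
  exact: relu_mx_ge0.
split=> // i j; rewrite /max_mx mxE; apply: le_trans (hm i j) _.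
by rewrite le_max lexx orbT.
Qed.

Lemma max_mx_sub m n (P M : 'M[R]_(m, n)) : max_mx P M - M = relu_mx (P - M).
Proof. by apply/matrixP => i j; rewrite /max_mx !mxE max_sub1. Qed.

Lemma relu_split_mx m n (A : 'M[R]_(m, n)) : relu_mx A - relu_mx (- A) = A.
Proof. by apply/matrixP => i j; rewrite !mxE relu_split1. Qed.

Lemma diff_lem m n p (P N : 'M[R]_(m, n)) (zp zm : 'M[R]_(n, p)) c e :
  (P *m zp + N *m zm + c) - (P *m zm + N *m zp + e) = (P - N) *m (zp - zm) + (c - e).
Proof.
rewrite mulmxBl !mulmxBr.
move: (P *m zp) (P *m zm) (N *m zp) (N *m zm) => a1 a2 a3 a4.
by apply/matrixP => i j; rewrite !mxE; ring.
Qed.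

Lemma Zpm_act (W : weights R d) (b : biases R d) l :
  (Zpm x W b l).1 - (Zpm x W b l).2 = act x W b l.+1.
Proof.
elim: l => [|l IH]; first by rewrite Zpm0 /= subr0.
have -> : act x W b l.+2 = relu_mx (W l.+1 *m act x W b l.+1 + b l.+1) by [].
rewrite -IH ZpmS /= max_mx_sub; congr relu_mx.
by rewrite -[X in _ - X]addr0 diff_lem subr0 relu_split_mx.
Qed.

Lemma Fx_AB n (W : weights R d) (b : biases R d) :
  Fx x n W b = Apart x n W b - Bpart x n W b.
Proof. by rewrite /Fx /Apart /Bpart diff_lem !relu_split_mx Zpm_act. Qed.

Variable n k : nat.
Variables (W W' : weights R d) (b b' : biases R d).
Hypothesis hfix : forall j : nat, (j < n.+2)%N -> j != k -> W j = W' j /\ b j = b' j.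
Variable t : R.
Hypothesis t0 : 0 <= t.
Hypothesis t1 : t <= 1.

Local Notation Wt := (combW t W W').
Local Notation bt := (combb t b b').

Lemma comb_same m p (A : 'M[R]_(m, p)) : t *: A + (1 - t) *: A = A.
Proof. by rewrite -scalerDl addrC subrK scale1r. Qed.

Lemma fixed j : (j < n.+2)%N -> j != k ->
  [/\ W' j = W j, Wt j = W j, b' j = b j & bt j = b j].
Proof.
move=> hj hk; have [e1 e2] := hfix hj hk.
by rewrite /combW /combb -e1 -e2 !comb_same.
Qed.

Lemma Zpm_conv l : (l < n.+2)%N ->
  ((l < k)%N -> Zpm x W' b' l = Zpm x W b l /\ Zpm x Wt bt l = Zpm x W b l) /\
  cvxm t (Zpm x W b l).1 (Zpm x W' b' l).1 (Zpm x Wt bt l).1 /\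
  cvxm t (Zpm x W b l).2 (Zpm x W' b' l).2 (Zpm x Wt bt l).2.
Proof.
elim: l => [|l IH] hl.
  case: (eqVneq k 0%N) => [hk|hk].
    split; first by rewrite hk.
    rewrite !Zpm0 /=; split; last exact: cvx_eq.
    have -> : Wt 0%N *m x + bt 0%N =
      t *: (W 0%N *m x + b 0%N) + (1 - t) *: (W' 0%N *m x + b' 0%N).
      rewrite /combW /combb mulmxDl -!scalemxAl.
      move: (W 0%N *m x) (W' 0%N *m x) => u v.
      by apply/matrixP => i j; rewrite !mxE; ring.
    by apply: cvx_relu => //; apply: cvx_lin.
  have hk' : 0%N != k by rewrite eq_sym.
  have [e1 e2 e3 e4] := fixed hl hk'.
  rewrite !Zpm0 e1 e2 e3 e4; split=> //; split; exact: cvx_eq.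
have hl' : (l < n.+2)%N by apply: ltnW.
have [IHe [IH1 IH2]] := IH hl'.
have [zp0 zm0] := Zpm_ge0 W b l.
case: (eqVneq k l.+1) => [hk|hk].
  have hlk : (l < k)%N by rewrite hk.
  have [E1 E2] := IHe hlk.
  split; first by rewrite hk ltnn.
  rewrite !ZpmS /= E1 E2.
  have cW : cvxm t (relu_mx (W l.+1)) (relu_mx (W' l.+1)) (relu_mx (Wt l.+1)).
    by apply: cvx_relu => //; apply: cvx_lin.
  have cN : cvxm t (relu_mx (- W l.+1)) (relu_mx (- W' l.+1)) (relu_mx (- Wt l.+1)).
    apply: cvx_relu => //; rewrite /combW opprD -!scalerN; exact: cvx_lin.
  have cb : cvxm t (b l.+1) (b' l.+1) (bt l.+1) by apply: cvx_lin.
  have c2 := cvx_add (cvx_mulvar zm0 cW) (cvx_mulvar zp0 cN).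
  split; last exact: c2.
  apply: cvx_max => //.
  apply: cvx_add => //; apply: cvx_add; [exact: cvx_mulvar zp0 cW | exact: cvx_mulvar zm0 cN].
have hk' : l.+1 != k by rewrite eq_sym.
have [e1 e2 e3 e4] := fixed hl hk'.
split.
  move=> hlk; have [E1 E2] := IHe (ltnW hlk).
  by rewrite !ZpmS E1 E2 e1 e2 e3 e4.
rewrite !ZpmS /= e1 e2 e3 e4.
have r0 := @relu_mx_ge0 R _ _ (W l.+1).
have r1 := @relu_mx_ge0 R _ _ (- W l.+1).
have c2 := cvx_add (cvx_mulfixed r0 IH2) (cvx_mulfixed r1 IH1).
split; last exact: c2.
apply: cvx_max => //.
apply: cvx_add; last exact: cvx_eq.
exact: cvx_add (cvx_mulfixed r0 IH1) (cvx_mulfixed r1 IH2).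
Qed.

End Net2.

(* L = n.+2 layers; block theta_l = (W (l-1), b (l-1)) is indexed by k = l-1 < n.+2 *)
Theorem theorem3p3 (R : realFieldType) (n : nat) (d : nat -> nat)
  (x : 'cV[R]_(d 0)) :
  (forall (W : weights R d) (b : biases R d),
      Fx x n W b = Apart x n W b - Bpart x n W b) /\
  (forall k : nat, (k < n.+2)%N ->
    forall (W W' : weights R d) (b b' : biases R d),
      (forall j : nat, (j < n.+2)%N -> j != k -> W j = W' j /\ b j = b' j) ->
      forall (t : R), 0 <= t <= 1 ->
      forall i : 'I_(d n.+2),
        (0 <= Apart x n W b i 0 /\ 0 <= Bpart x n W b i 0) /\
        Apart x n (combW t W W') (combb t b b') i 0
          <= t * Apart x n W b i 0 + (1 - t) * Apart x n W' b' i 0 /\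
        Bpart x n (combW t W W') (combb t b b') i 0
          <= t * Bpart x n W b i 0 + (1 - t) * Bpart x n W' b' i 0).
Proof.
split; first by move=> W b; exact: Fx_AB.
move=> k hk W W' b b' hfix t /andP[t0 t1] i.
have [zp0 zm0] := Zpm_ge0 x W b n.
have r0 := @relu_mx_ge0 R _ _ (W n.+1).
have r1 := @relu_mx_ge0 R _ _ (- W n.+1).
split.
  rewrite /Apart /Bpart; split; rewrite mxE; apply: addr_ge0;
  try exact: relu_mx_ge0; rewrite mxE; apply: addr_ge0; exact: nonneg_mul.
have hn : (n < n.+2)%N by [].
have [IHe [IH1 IH2]] := Zpm_conv x hfix t0 t1 hn.
suff [cA cB] : cvxm t (Apart x n W b) (Apart x n W' b') (Apart x n (combW t W W') (combb t b b')) /\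
               cvxm t (Bpart x n W b) (Bpart x n W' b') (Bpart x n (combW t W W') (combb t b b')).
  by split; [exact: cA | exact: cB].
case: (eqVneq k n.+1) => [ek|ek].
  have hnk : (n < k)%N by rewrite ek.
  have [E1 E2] := IHe hnk.
  rewrite /Apart /Bpart E1 E2.
  have [zp0' zm0'] := Zpm_ge0 x W b n.
  have cW : cvxm t (relu_mx (W n.+1)) (relu_mx (W' n.+1)) (relu_mx (combW t W W' n.+1)).
    by apply: cvx_relu => //; apply: cvx_lin.
  have cN : cvxm t (relu_mx (- W n.+1)) (relu_mx (- W' n.+1)) (relu_mx (- combW t W W' n.+1)).
    apply: cvx_relu => //; rewrite /combW opprD -!scalerN; exact: cvx_lin.
  have cb : cvxm t (relu_mx (b n.+1)) (relu_mx (b' n.+1)) (relu_mx (combb t b b' n.+1)).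
    by apply: cvx_relu => //; apply: cvx_lin.
  have cNb : cvxm t (relu_mx (- b n.+1)) (relu_mx (- b' n.+1)) (relu_mx (- combb t b b' n.+1)).
    apply: cvx_relu => //; rewrite /combb opprD -!scalerN; exact: cvx_lin.
  split; apply: cvx_add => //; apply: cvx_add; exact: cvx_mulvar.
have ek' : n.+1 != k by rewrite eq_sym.
have [e1 e2 e3 e4] := fixed hfix t (ltnSn n.+1) ek'.
rewrite /Apart /Bpart e1 e2 e3 e4.
split; (apply: cvx_add; last exact: cvx_eq); apply: cvx_add; exact: cvx_mulfixed.
Qed.
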